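(* Let $\beta\in\mathbb{F}_{p^m}\setminus\{0\}$ and let $\mathcal{C}=\left\langle\left(x^2+\gamma x+\frac{\gamma^2}{2}\right)^i\left(x^2-\gamma x+\frac{\gamma^2}{2}\right)^j\right\rangle$ be an ideal of $R[x]/\langle x^{4p^s}-(\alpha+\beta u)\rangle$ with $0\le i,j\le 2p^s$. Then $|\mathcal{C}|=p^{m(8p^s-2i-2j)}$.
   Context: Let $p$ be an odd prime and $m,s$ positive integers with $p^m\equiv 3\pmod 4$; $\mathbb{F}_{p^m}$ is the field with $p^m$ elements and $R=\mathbb{F}_{p^m}[u]/\langle u^2\rangle$. Fix $\alpha\in\mathbb{F}_{p^m}\setminus\{0\}$ that is not a square in $\mathbb{F}_{p^m}$, let $\alpha_0\in\mathbb{F}_{p^m}$ satisfy $\alpha_0^{p^s}=\alpha$, and let $\gamma\in\mathbb{F}_{p^m}$ satisfy $\gamma^4+4\alpha_0=0$. *)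

(* Defs.v *)
From HB Require Import structures.
From mathcomp Require Import all_boot all_order all_algebra all_field.
Set Implicit Arguments. Unset Strict Implicit. Unset Printing Implicit Defensive.
Import GRing.Theory.
Local Open Scope ring_scope.

(* R = F[u]/<u^2>, realised as the quotient ring {poly %/ 'X^2} (u = 'qX). *)
Definition dualR (F : finFieldType) := {poly %/ ('X^2 : {poly F})}.

Definition dual_elt (F : finFieldType) (a b : F) : dualR F :=
  in_qpoly ('X^2) (a%:P + b%:P * 'X).

Definition dual_const (F : finFieldType) (a : F) : dualR F := dual_elt a 0.

Definition quot_ring (F : finFieldType) (n : nat) (c : dualR F) :=
  {poly %/ ('X^n - c%:P : {poly dualR F})}.

Definition principal_ideal (F : finFieldType) (n : nat) (c : dualR F)
  (a : quot_ring n c) : {set quot_ring n c} :=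
  [set b | [exists r : quot_ring n c, b == r * a]].

(* Main.v *)
Require Import Defs.
From HB Require Import structures.
From mathcomp Require Import all_boot all_order all_algebra all_field.
From mathcomp Require Import ring zify.
Import GRing.Theory.
Local Open Scope ring_scope.

Section Aux.
Variable F : finFieldType.
Local Notation R := (dualR F).
Local Notation emb := (qpolyC ('X^2 : {poly F})).

Lemma small3 (q : {poly F}) : (size q < 3)%N ->
  Pdiv.CommonRing.rmodp q (mk_monic ('X^2 : {poly F})) = q.
Proof. by move=> h; rewrite Pdiv.Ring.rmodp_small // mk_monic_Xn size_polyXn. Qed.

Lemma dual_constE a : dual_const a = emb a.
Proof.
apply: val_inj => /=; rewrite mul0r addr0.
by rewrite small3 // size_polyC; case: (_ != _).
Qed.

Lemma dual_eltE a b : dual_elt a b = emb a + emb b * 'qX.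
Proof.
rewrite /dual_elt in_qpolyD in_qpolyM.
congr (_ + _ * _); apply: val_inj => /=; rewrite small3 //;
  rewrite size_polyC; by case: (_ != _).
Qed.

Lemma qX2 : ('qX : R) * 'qX = 0.
Proof.
rewrite -in_qpolyM; apply: val_inj => /=.
rewrite mk_monic_Xn /= -expr2 Pdiv.RingMonic.rmodpp //; exact: monicXn.
Qed.

Lemma decomp (r : R) :
  r = emb ((r : {poly F})`_0) + emb ((r : {poly F})`_1) * 'qX.
Proof.
rewrite -dual_eltE; apply: val_inj => /=.
rewrite small3; last first.
  apply: (leq_ltn_trans (size_polyD _ _)).
  rewrite gtn_max (leq_ltn_trans (size_polyC_leq1 _)) //=.
  apply: (leq_ltn_trans (size_polyMleq _ _)).
  have := size_polyC_leq1 ((r : {poly F})`_1); rewrite size_polyX; by case: (size _) => [|[|]].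
have hs : (size (r : {poly F}) <= 2)%N.
  rewrite -ltnS; apply: (leq_trans (size_mk_monic r)).
  by rewrite mk_monic_Xn size_polyXn.
apply/polyP => k; rewrite coefD coefC coefMX coefC.
case: k => [|[|k]] /=; rewrite ?addr0 ?add0r //.
by rewrite nth_default //; apply: leq_trans hs _.
Qed.
End Aux.

Section Main.
Variable F : finFieldType.
Local Notation R := (dualR F).
Local Notation emb := (qpolyC ('X^2 : {poly F})).
Variables (N : nat) (alpha beta : F) (c : R).
Hypotheses (N_gt0 : (0 < N)%N) (beta0 : beta != 0)
  (hc : c = emb alpha + emb beta * 'qX).
Local Notation H := ('X^N - c%:P : {poly R}).
Local Notation S := {poly %/ H}.

Definition Psi (q : {poly F}) : S := in_qpoly H (map_poly emb q).

Lemma PsiD a b : Psi (a + b) = Psi a + Psi b.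
Proof. by rewrite /Psi rmorphD in_qpolyD. Qed.
Lemma PsiM a b : Psi (a * b) = Psi a * Psi b.
Proof. by rewrite /Psi rmorphM in_qpolyM. Qed.

Lemma mkH : mk_monic H = H.
Proof. by rewrite /mk_monic size_XnsubC // monicXnsubC // ltnS N_gt0. Qed.

Lemma in_qpoly_val (s : S) : in_qpoly H (s : {poly R}) = s.
Proof. by apply: val_inj; apply: in_qpoly_small; apply: size_mk_monic. Qed.

Lemma in_qpolyHH : in_qpoly H H = 0.
Proof.
apply: val_inj => /=; rewrite mkH Pdiv.RingMonic.rmodpp //.
exact: monicXnsubC.
Qed.

Lemma size_S (s : S) : (size (s : {poly R}) <= N)%N.
Proof.
rewrite -ltnS; apply: (leq_trans (size_mk_monic s)).
by rewrite mkH size_XnsubC.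
Qed.

Definition w : S := in_qpoly H ((emb beta * 'qX)%:P).

Lemma PsiXN : Psi ('X^N - alpha%:P) = w.
Proof.
rewrite /Psi rmorphB /= map_polyXn map_polyC /=.
have -> : 'X^N - (emb alpha)%:P = H + (emb beta * 'qX)%:P.
  by rewrite hc polyCD opprD addrA subrK.
by rewrite in_qpolyD in_qpolyHH add0r.
Qed.

Lemma w2 : w * w = 0.
Proof.
rewrite /w -in_qpolyM -polyCM mulrACA qX2 mulr0 polyC0.
by apply: val_inj => /=; rewrite Pdiv.Ring.rmod0p.
Qed.

Lemma Psih t : Psi (('X^N - alpha%:P) ^+ 2 * t) = 0.
Proof. by rewrite PsiM (expr2 ('X^N - alpha%:P)) PsiM PsiXN w2 mul0r. Qed.

Lemma Psi_surj (s : S) : exists2 q : {poly F}, (size q <= 2 * N)%N & Psi q = s.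
Proof.
set P := (s : {poly R}).
set A := \poly_(k < N) ((P`_k : R) : {poly F})`_0.
set B := \poly_(k < N) ((P`_k : R) : {poly F})`_1.
exists (A + (beta^-1)%:P * ('X^N - alpha%:P) * B).
  apply: (leq_trans (size_polyD _ _)); rewrite geq_max.
  apply/andP; split; first by apply: (leq_trans (size_poly _ _)); lia.
  apply: (leq_trans (size_polyMleq _ _)).
  have h1 := size_poly N (fun k => ((P`_k : R) : {poly F})`_1).
  have h2 := size_polyMleq (beta^-1)%:P ('X^N - alpha%:P).
  have h3 := size_polyC_leq1 (beta^-1).
  rewrite size_XnsubC // in h2.
  move: h1 h2 h3; rewrite -/B.
  move: (size B) (size (beta^-1)%:P) (size ((beta^-1)%:P * ('X^N - alpha%:P))).
  move=> x y z; lia.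
rewrite PsiD !PsiM PsiXN.
have -> : Psi (beta^-1)%:P * w = in_qpoly H ('qX%:P).
  rewrite /Psi map_polyC /w -in_qpolyM -polyCM mulrA -qpolyCM mulVf //.
  by congr (in_qpoly _ (_ %:P)); exact: mul1r.
rewrite /Psi -in_qpolyM -in_qpolyD -(in_qpoly_val s); congr (in_qpoly H _).
apply/polyP => k; rewrite coefD coefCM !coef_map !coef_poly /=.
case: (ltnP k N) => hk.
  by rewrite [RHS]decomp mulrC.
rewrite !rmorph0 mulr0 addr0 nth_default //.
exact: leq_trans (size_S s) hk.
Qed.


Lemma card_R : #|R| = (#|F| ^ 2)%N.
Proof. by rewrite card_monic_qpoly ?size_polyXn ?monicXn. Qed.

Lemma card_S : #|S| = (#|F| ^ (2 * N))%N.
Proof.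
rewrite card_monic_qpoly ?size_XnsubC ?monicXnsubC ?ltnS //=.
by rewrite card_R -expnM.
Qed.

Definition T (q : {poly_(2 * N) F}) : S := Psi q.

Lemma T_inj : injective T.
Proof.
suff h : {in predT &, injective T} by move=> x y; apply: h.
apply/image_injP; rewrite eqn_leq leq_image_card /=.
rewrite card_npoly -card_S; apply: subset_leq_card; apply/subsetP => s _.
have [q hq <-] := Psi_surj s.
apply/imageP; exists (npolyp (2 * N) q) => //.
by rewrite /T npolypK.
Qed.

Lemma Psi_inj2 (q q' : {poly F}) : (size q <= 2 * N)%N ->
  (size q' <= 2 * N)%N -> Psi q = Psi q' -> q = q'.
Proof.
move=> hq hq' e.
have := @T_inj (npolyp (2 * N) q) (npolyp (2 * N) q').
rewrite /T !npolypK // => /(_ e) /(congr1 val) /=.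
by rewrite !npolypK.
Qed.

Lemma card_ideal (f f' : {poly F}) (e : nat) :
  f * f' = ('X^N - alpha%:P) ^+ 2 -> size f' = e.+1 ->
  (size f + e = (2 * N).+1)%N -> f != 0 ->
  #|principal_ideal (Psi f)| = (#|F| ^ e)%N.
Proof.
move=> hff' hf' hsz f0.
have f'0 : f' != 0 by rewrite -size_poly_gt0 hf'.
pose M (q : {poly_e F}) : S := Psi ((q : {poly F}) * f).
have Minj : injective M.
  move=> q q' /Psi_inj2 h.
  have hs (r : {poly_e F}) : (size (polyn r * f)%R <= 2 * N)%N.
    apply: (leq_trans (size_polyMleq _ _)).
    have := size_npoly r; lia.
  by apply: val_inj; apply: (mulIf f0); apply: h.
have -> : principal_ideal (Psi f) = [set M q | q in predT].
  apply/setP => b; rewrite inE; apply/existsP/imsetP.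
    case=> r /eqP ->.
    have [q0 _ <-] := Psi_surj r.
    have hs : (size (q0 %% f')%R <= e)%N.
      by have := ltn_modpN0 q0 f'0; rewrite hf'.
    exists (npolyp e (q0 %% f')) => //.
    rewrite /M npolypK // -PsiM {1}(divp_eq q0 f') mulrDl -mulrA.
    by rewrite [f' * f]mulrC hff' PsiD mulrC Psih add0r.
  by case=> q _ ->; exists (Psi q); rewrite /M PsiM.
by rewrite card_imset // card_npoly.
Qed.

End Main.

Lemma two_neq0 (F : fieldType) (p : nat) : odd p -> p \in [pchar F] ->
  (2%:R : F) != 0.
Proof.
move=> op cp; apply/negP => /eqP h2.
have : (2%N \in [pchar F]) by rewrite inE h2 eqxx andbT.
by rewrite (pcharf_eq cp) inE => /eqP e; rewrite -e in op.
Qed.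

Lemma size_deg2 (F : fieldType) (a b : F) :
  size ('X^2 + a%:P * 'X + b%:P) = 3%N.
Proof.
rewrite -addrA size_polyDl size_polyXn // ltnS.
apply: (leq_trans (size_polyD _ _)); rewrite geq_max (leq_trans (size_polyC_leq1 _)) // andbT.
apply: (leq_trans (size_polyMleq _ _)); rewrite size_polyX.
by have := size_polyC_leq1 a; case: (size _) => [|[|]].
Qed.

Lemma fact4 (F : fieldType) (a0 g : F) : (2%:R : F) != 0 ->
  g ^+ 4 + 4%:R * a0 = 0 ->
  ('X^2 + g%:P * 'X + (g ^+ 2 / 2%:R)%:P) *
  ('X^2 - g%:P * 'X + (g ^+ 2 / 2%:R)%:P) = 'X^4 - a0%:P :> {poly F}.
Proof.
move=> h2 hg.
have e1 : 2%:R * (g ^+ 2 / 2%:R)%:P = g%:P ^+ 2 :> {poly F}.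
  by rewrite -polyC_natr -polyCM -(rmorphXn polyC) mulrC mulfVK.
have e2 : (g ^+ 2 / 2%:R)%:P * (g ^+ 2 / 2%:R)%:P + a0%:P = 0 :> {poly F}.
  rewrite -polyCM -polyCD -[0]polyC0; f_equal.
  have -> : a0 = - (g ^+ 4) / 4%:R.
    have h4 : (4%:R : F) != 0.
      have -> : (4%:R : F) = 2%:R * 2%:R by rewrite -natrM.
      by rewrite mulf_neq0.
    by apply: (mulIf h4); rewrite mulfVK // mulrC; apply/eqP; rewrite -addr_eq0 addrC hg.
  field.
  have -> : (4%:R : F) = 2%:R * 2%:R by rewrite -natrM.
  by rewrite mulf_neq0.
set c := (g ^+ 2 / 2%:R)%:P in e1 e2 *.
have -> : 'X^4 - a0%:P = 'X^4 - a0%:P + (2%:R * c - g%:P ^+ 2) * 'X^2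
   + (c * c + a0%:P) :> {poly F}.
  by rewrite e1 e2 subrr mul0r !addr0.
ring.
Qed.

Lemma frob (F : fieldType) (p s : nat) (a0 : F) : prime p -> odd p ->
  p \in [pchar F] ->
  ('X^4 - a0%:P) ^+ (p ^ s) = 'X^(4 * p ^ s) - (a0 ^+ (p ^ s))%:P :> {poly F}.
Proof.
move=> pp op cp.
rewrite exprDn_pchar; last by rewrite pnatX pnatE // pchar_poly cp.
rewrite -exprM exprNn -signr_odd oddX op orbT expr1 mulN1r.
by rewrite (rmorphXn polyC).
Qed.

Lemma arith1 (P i j : nat) : (i <= 2 * P)%N -> (j <= 2 * P)%N ->
  ((2 * (2 * P - i)).+1 + (2 * (2 * P - j)).+1).-1 = (8 * P - 2 * i - 2 * j).+1.
Proof. lia. Qed.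

Lemma arith2 (P i j : nat) : (i <= 2 * P)%N -> (j <= 2 * P)%N ->
  ((2 * i + 2 * j).+1 + (8 * P - 2 * i - 2 * j))%N = (2 * (4 * P)).+1.
Proof. lia. Qed.

Theorem theorem3p6 (F : finFieldType) (p m s : nat)
  (alpha alpha0 gamma beta : F) (i j : nat) :
  prime p -> odd p -> p \in [pchar F] ->
  (0 < m)%N -> (0 < s)%N ->
  #|F| = (p ^ m)%N -> (p ^ m %% 4 = 3)%N ->
  alpha != 0 -> (forall y : F, y ^+ 2 != alpha) ->
  alpha0 ^+ (p ^ s) = alpha ->
  gamma ^+ 4 + 4%:R * alpha0 = 0 ->
  beta != 0 ->
  (i <= 2 * p ^ s)%N -> (j <= 2 * p ^ s)%N ->
  let c := dual_elt alpha beta in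
  let g1 : {poly dualR F} :=
    'X^2 + (dual_const gamma)%:P * 'X + (dual_const (gamma ^+ 2 / 2%:R))%:P in
  let g2 : {poly dualR F} :=
    'X^2 - (dual_const gamma)%:P * 'X + (dual_const (gamma ^+ 2 / 2%:R))%:P in
  #|principal_ideal (in_qpoly ('X^(4 * p ^ s) - c%:P) (g1 ^+ i * g2 ^+ j))|
    = (p ^ (m * (8 * p ^ s - 2 * i - 2 * j)))%N.
Proof.
move=> pp op cp m0 s0 hF hmod a0 nsq ha0 hg b0 hi hj c g1 g2.
have h2 := @two_neq0 F p op cp.
pose G1 : {poly F} := 'X^2 + gamma%:P * 'X + (gamma ^+ 2 / 2%:R)%:P.
pose G2 : {poly F} := 'X^2 - gamma%:P * 'X + (gamma ^+ 2 / 2%:R)%:P.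
have hc : c = qpolyC ('X^2 : {poly F}) alpha + qpolyC ('X^2 : {poly F}) beta * 'qX.
  exact: dual_eltE.
have N0 : (0 < 4 * p ^ s)%N by rewrite muln_gt0 expn_gt0 (prime_gt0 pp).
pose f := G1 ^+ i * G2 ^+ j.
pose f' := G1 ^+ (2 * p ^ s - i) * G2 ^+ (2 * p ^ s - j).
have hff' : f * f' = ('X^(4 * p ^ s) - alpha%:P) ^+ 2.
  rewrite -ha0 -(@frob F p s alpha0 pp op cp) -(@fact4 F alpha0 gamma h2 hg).
  change (f * f' = (G1 * G2) ^+ (p ^ s) ^+ 2).
  by rewrite -exprM exprMn /f /f' mulrACA -!exprD !subnKC // (mulnC (p ^ s)%N).

have sG1 : size G1 = 3%N by apply: size_deg2.
have sG2 : size G2 = 3%N.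
  by rewrite /G2 -mulNr -polyCN size_deg2.
have G10 : G1 != 0 by rewrite -size_poly_gt0 sG1.
have G20 : G2 != 0 by rewrite -size_poly_gt0 sG2.
have sexp (G : {poly F}) n : size G = 3%N -> size (G ^+ n) = (2 * n).+1.
  move=> sG; have G0 : G != 0 by rewrite -size_poly_gt0 sG.
  have hpos : (0 < size (G ^+ n))%N by rewrite size_poly_gt0 expf_neq0.
  by rewrite -(prednK hpos) size_exp sG.
have sf : size f = (2 * i + 2 * j).+1.
  by rewrite /f size_mul ?expf_neq0 // (sexp _ _ sG1) (sexp _ _ sG2) addSn addnS.
have sf' : size f' = (8 * p ^ s - 2 * i - 2 * j).+1.
  by rewrite /f' size_mul ?expf_neq0 // (sexp _ _ sG1) (sexp _ _ sG2) arith1.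
have Psif : Psi F (4 * p ^ s)%N c f = in_qpoly ('X^(4 * p ^ s) - c%:P) (g1 ^+ i * g2 ^+ j).
  rewrite /Psi rmorphM !rmorphXn /=; congr (in_qpoly _ (_ ^+ i * _ ^+ j)).
    by rewrite /G1 /g1 !rmorphD /= map_polyXn (rmorphM _ (gamma%:P) 'X) /= map_polyX !map_polyC /= !dual_constE.
  by rewrite /G2 /g2 rmorphD rmorphB /= map_polyXn (rmorphM _ (gamma%:P) 'X) /= map_polyX !map_polyC /= !dual_constE.
rewrite -Psif (@card_ideal F _ alpha beta c N0 b0 hc f f' _ hff' sf').
- by rewrite hF -expnM.
- by rewrite sf arith2.
- by rewrite mulf_neq0 // expf_neq0.
Qed.
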